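(* Let $G=(I\cup C,E)$ be a split graph whose clique vertices are labelled $1,\dots,k$ so that conditions (i)–(iii) below hold, and let $w$ be the word constructed below. If $x,y\in V=I\cup C$ are adjacent in $G$, then $x$ and $y$ alternate in $w$.
   Context: Words: a word over a finite set $X$ is a finite sequence of elements of $X$; for a word $u$ and $S\subseteq X$, $u|_S$ is the subsequence of $u$ consisting of all occurrences of letters of $S$; $u^R$ is the reversal of $u$. Two letters $x,y$ alternate in $u$ if $u|_{\{x,y\}}$ is of the form $xyxy\cdots$ or $yxyx\cdots$ (of even or odd length); otherwise they do not alternate. For integers $a\le b$, $[a,b]=\{a,a+1,\dots,b\}$. Setting: $G=(I\cup C,E)$ is a split graph: $C$ induces a clique, $I$ induces an independent set, and $C$ is inclusion-wise maximal, i.e. no vertex of $I$ is adjacent to all vertices of $C$. The vertices of $C$ are labelled by $1,\dots,k$ where $k=|C|$, and for all $a,b\in I$: (i) either $N(a)=[1,m]\cup[n,k]$ for some $m<n$, or $N(a)=[l,r]$ for some $l\le r$; (ii) if $N(a)=[1,m]\cup[n,k]$ ($m<n$) and $N(b)=[l,r]$ ($l\le r$), then $l>m$ or $r<n$; (iii) if $N(a)=[1,m]\cup[n,k]$ and $N(b)=[1,m']\cup[n',k]$ ($m<n$, $m'<n'$), then $m'<n$ and $m<n'$. Let $B$ be the set of $a\in I$ whose neighbourhood is an integer interval $[l_a,r_a]$, and $A=I\setminus B$; for $a\in A$ write $N(a)=[1,m_a]\cup[n_a,k]$ with $m_a<n_a$. Construction of $w$: start with $p_1=p_2=p_3=12\cdots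 k$. Process the vertices of $I$ one at a time in an arbitrary fixed order; ''replace $y$ in $p$ by $yx$'' (resp. $xy$) means replacing the unique occurrence of the letter $y$ in $p$ by the two letters $yx$ (resp. $xy$). For $a\in A$: replace $m_a$ in $p_1$ by $m_a a$, and replace $n_a$ in $p_2$ by $a n_a$. For $a\in B$: replace $l_a$ in $p_1$ by $a l_a$, and replace $r_a$ in $p_2$ by $r_a a$. After all vertices of $I$ are processed, let $d=\max(\{1\}\cup\{m_a: a\in A\})$ and replace the letter $d$ in $p_3$ by the word $d\,(p_1|_A)^R$. Finally set $w=p_1\,(p_1|_B)^R\,p_2\,p_3$ (a $3$-uniform word over $V$). *)

(* Defs.v *)
From mathcomp Require Import all_boot.
Set Implicit Arguments. Unset Strict Implicit. Unset Printing Implicit Defensive.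

(* Vertices of the split graph: [inl i] is the clique vertex labelled i
   (1 <= i <= k), [inr a] is the independent vertex a : T. *)
Definition vtx (T : eqType) := (nat + T)%type.

Definition restr2 (T : eqType) (x y : vtx T) (u : seq (vtx T)) : seq (vtx T) :=
  [seq z <- u | (z == x) || (z == y)].

Definition altw (T : eqType) (x y : vtx T) (n : nat) : seq (vtx T) :=
  mkseq (fun i => if odd i then y else x) n.

Definition alternate (T : eqType) (x y : vtx T) (u : seq (vtx T)) : Prop :=
  let s := restr2 x y u in s = altw x y (size s) \/ s = altw y x (size s).

Definition repl_after (T : eqType) (y x : vtx T) (p : seq (vtx T)) :=
  flatten [seq (if z == y then [:: z; x] else [:: z]) | z <- p].
Definition repl_before (T : eqType) (y x : vtx T) (p : seq (vtx T)) :=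
  flatten [seq (if z == y then [:: x; z] else [:: z]) | z <- p].

Definition p0 (T : eqType) (k : nat) : seq (vtx T) := [seq inl i | i <- iota 1 k].

Section Construction.
Variables (T : eqType) (k : nat) (I : seq T) (inA : T -> bool)
          (m n l r : T -> nat).

Definition step1 (p : seq (vtx T)) (a : T) : seq (vtx T) :=
  if inA a then repl_after (inl (m a)) (inr a) p
  else repl_before (inl (l a)) (inr a) p.
Definition step2 (p : seq (vtx T)) (a : T) : seq (vtx T) :=
  if inA a then repl_before (inl (n a)) (inr a) p
  else repl_after (inl (r a)) (inr a) p.

Definition p1 : seq (vtx T) := foldl step1 (p0 T k) I.
Definition p2 : seq (vtx T) := foldl step2 (p0 T k) I.

Definition isA (v : vtx T) : bool := if v is inr a then inA a else false.
Definition isB (v : vtx T) : bool := if v is inr a then ~~ inA a else false.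

Definition dmax : nat := maxn 1 (\max_(a <- I | inA a) m a).

Definition p3 : seq (vtx T) :=
  flatten [seq (if z == inl dmax then inl dmax :: rev (filter isA p1) else [:: z])
          | z <- p0 T k].

Definition word_w : seq (vtx T) := p1 ++ rev (filter isB p1) ++ p2 ++ p3.
End Construction.

Definition inV (T : eqType) (k : nat) (I : seq T) (v : vtx T) : bool :=
  match v with inl i => (1 <= i <= k) | inr a => a \in I end.

Definition adj (T : eqType) (N : T -> nat -> bool) (x y : vtx T) : bool :=
  match x, y with
  | inl i, inl j => i != j
  | inl i, inr a => N a i
  | inr a, inl i => N a i
  | inr _, inr _ => false
  end.

(* Main.v *)
Require Import Defs.
From mathcomp Require Import all_boot zify.
Set Implicit Arguments. Unset Strict Implicit. Unset Printing Implicit Defensive.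

Section Aux.
Variable T : eqType.
Implicit Types (p u v : seq (vtx T)) (z x y : vtx T).

Lemma inl_eq (i j : nat) : (inl i == inl j :> vtx T) = (i == j).
Proof. by []. Qed.
Lemma inl_inr (i : nat) (a : T) : (inl i == inr a :> vtx T) = false.
Proof. by []. Qed.
Lemma inr_inl (i : nat) (a : T) : (inr a == inl i :> vtx T) = false.
Proof. by []. Qed.

Lemma inl_inj : injective (@inl nat T).
Proof. by move=> ? ? []. Qed.

Lemma flat_id (f : vtx T -> seq (vtx T)) u :
  (forall z, z \in u -> f z = [:: z]) -> flatten (map f u) = u.
Proof.
elim: u => //= z u IH H; rewrite H ?mem_head //= IH // => w Hw.
by apply: H; rewrite inE Hw orbT.
Qed.

Lemma flat_split (f : vtx T -> seq (vtx T)) u y v :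
  (forall z, z \in u ++ v -> f z = [:: z]) ->
  flatten (map f (u ++ y :: v)) = u ++ f y ++ v.
Proof.
move=> H; rewrite map_cat flatten_cat /= (flat_id (u:=u)) ?(flat_id (u:=v)) //.
- by move=> z Hz; apply: H; rewrite mem_cat Hz orbT.
- by move=> z Hz; apply: H; rewrite mem_cat Hz.
Qed.

Lemma filter_flat_same (P : pred (vtx T)) (f : vtx T -> seq (vtx T)) p :
  (forall z, filter P (f z) = filter P [:: z]) ->
  filter P (flatten (map f p)) = filter P p.
Proof.
move=> H; elim: p => //= z p IH; rewrite filter_cat H IH /=.
by case: (P z).
Qed.

Lemma filter_flat_comm (P : pred (vtx T)) (f : vtx T -> seq (vtx T)) p :
  (forall z, filter P (f z) = if P z then f z else [::]) ->
  filter P (flatten (map f p)) = flatten (map f (filter P p)).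
Proof.
move=> H; elim: p => //= z p IH; rewrite filter_cat H IH.
by case: (P z).
Qed.

Lemma filter_ra_out (P : pred (vtx T)) y x p :
  ~~ P x -> filter P (repl_after y x p) = filter P p.
Proof.
move=> Hx; apply: filter_flat_same => z /=.
by case: (z == y) => //=; rewrite (negbTE Hx); case: (P z).
Qed.
Lemma filter_rb_out (P : pred (vtx T)) y x p :
  ~~ P x -> filter P (repl_before y x p) = filter P p.
Proof.
move=> Hx; apply: filter_flat_same => z /=.
by case: (z == y) => //=; rewrite (negbTE Hx); case: (P z).
Qed.
Lemma filter_ra_in (P : pred (vtx T)) y x p :
  P x -> P y -> filter P (repl_after y x p) = repl_after y x (filter P p).
Proof.
move=> Hx Hy; apply: filter_flat_comm => z /=.
case: eqP => [->|_] /=; first by rewrite Hy Hx.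
by case: (P z).
Qed.
Lemma filter_rb_in (P : pred (vtx T)) y x p :
  P x -> P y -> filter P (repl_before y x p) = repl_before y x (filter P p).
Proof.
move=> Hx Hy; apply: filter_flat_comm => z /=.
case: eqP => [->|_] /=; first by rewrite Hy Hx.
by case: (P z).
Qed.

Lemma filt_iota (Q : pred nat) i s n :
  (forall t, s <= t < s + n -> Q t = (t == i)) ->
  filter Q (iota s n) = if s <= i < s + n then [:: i] else [::].
Proof.
elim: n s => [|n IH] s H /=.
  by have -> : (s <= i < s + 0) = false by lia.
rewrite H; last by lia.
rewrite IH; last by move=> t Ht; apply: H; lia.
case: (eqVneq s i) => [->|ne].
  have -> : (i.+1 <= i < i.+1 + n) = false by lia.
  by have -> : (i <= i < i + n.+1) = true by lia.
have -> : (s.+1 <= i < s.+1 + n) = (s <= i < s + n.+1) by lia.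
by [].
Qed.

Lemma fold_out (st : seq (vtx T) -> T -> seq (vtx T)) (Q : pred (vtx T)) q S :
  (forall q b, b \in S -> filter Q (st q b) = filter Q q) ->
  filter Q (foldl st q S) = filter Q q.
Proof.
elim: S q => //= b S IH q H.
rewrite IH; first by apply: H; rewrite mem_head.
by move=> q' b' Hb; apply: H; rewrite inE Hb orbT.
Qed.

Lemma filter_sub (P Q : pred (vtx T)) s :
  (forall z, P z -> Q z) -> filter P (filter Q s) = filter P s.
Proof.
move=> H; rewrite -filter_predI; apply: eq_filter => z /=.
by case Pz: (P z) => //; rewrite H.
Qed.

Lemma filter_commute (P Q : pred (vtx T)) s :
  filter P (filter Q s) = filter Q (filter P s).
Proof. by rewrite -!filter_predI; apply: eq_filter => z /=; rewrite andbC. Qed.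

Lemma filter_nil (P Q : pred (vtx T)) s :
  (forall z, Q z -> ~~ P z) -> filter P (filter Q s) = [::].
Proof.
move=> H; rewrite -filter_predI -(filter_pred0 s); apply: eq_filter => z /=.
by case Qz: (Q z); rewrite ?andbF // andbT; apply/negbTE/H.
Qed.

Lemma p0_split k j : 1 <= j <= k ->
  p0 T k = map inl (iota 1 j.-1) ++ inl j :: map inl (iota j.+1 (k - j)).
Proof.
move=> /andP[h1 h2]; rewrite /p0 -map_cons -map_cat; congr map.
have E : k = j.-1 + (k - j).+1 by lia.
rewrite {1}E iotaD /=.
by have -> : 1 + j.-1 = j by lia.
Qed.

Lemma notin_U j : inl j \notin (map inl (iota 1 j.-1) : seq (vtx T)).
Proof. rewrite (mem_map inl_inj) mem_iota; lia. Qed.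
Lemma notin_V k j : inl j \notin (map inl (iota j.+1 (k - j)) : seq (vtx T)).
Proof. rewrite (mem_map inl_inj) mem_iota; lia. Qed.

End Aux.

Section Aux2.
Variables (T : eqType) (k : nat) (I : seq T) (inA : T -> bool) (m n l r : T -> nat).

Definition Pp (i : nat) (a : T) := fun z : vtx T => (z == inl i) || (z == inr a).

Lemma filt_U (i : nat) (a : T) s c :
  filter (Pp i a) (map inl (iota s c)) =
  if s <= i < s + c then [:: inl i] else [::].
Proof.
rewrite filter_map (@filt_iota (preim inl (Pp i a)) i).
  by case: ifP.
by move=> t _ /=; rewrite /Pp inl_eq inl_inr orbF.
Qed.

Lemma filtP_split i a j X Y : 1 <= i <= k -> 1 <= j <= k ->
  filter (Pp i a) (map inl (iota 1 j.-1) ++ X ++ inl j :: Y ++ map inl (iota j.+1 (k - j)))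
  = (if i < j then [:: inl i] else [::]) ++ filter (Pp i a) X ++
    (if i == j then [:: inl i] else [::]) ++ filter (Pp i a) Y ++
    (if j < i then [:: inl i] else [::]).
Proof.
move=> hi hj; rewrite !filter_cat /= filter_cat !filt_U {2}/Pp inl_eq inl_inr orbF eq_sym.
have -> : (1 <= i < 1 + j.-1) = (i < j) by lia.
have -> : (j < i < j.+1 + (k - j)) = (j < i) by lia.
by case: eqP => [->|].
Qed.

Definition Qa (a : T) := fun z : vtx T => if z is inr b then b == a else true.

Lemma p0_Qa a : filter (Qa a) (p0 T k) = p0 T k.
Proof. by apply/all_filterP; rewrite all_map; apply/allP. Qed.

Lemma fold_Qa (st : seq (vtx T) -> T -> seq (vtx T)) a :
  uniq I -> a \in I ->
  (forall q b, b != a -> filter (Qa a) (st q b) = filter (Qa a) q) ->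
  (forall q, filter (Qa a) (st q a) = st (filter (Qa a) q) a) ->
  filter (Qa a) (foldl st (p0 T k) I) = st (p0 T k) a.
Proof.
move=> U Ha Hout Hin; move: U; case/splitPr: Ha => I1 I2 U.
have [n1 n2] : a \notin I1 /\ a \notin I2.
  move: U; rewrite uniq_catC /= mem_cat negb_or => /andP[/andP[H1 H2] _].
  by split.
rewrite foldl_cat /= fold_out; last first.
  by move=> q b Hb; apply: Hout; apply/negP => /eqP E; subst; rewrite Hb in n2.
rewrite Hin fold_out ?p0_Qa //.
by move=> q b Hb; apply: Hout; apply/negP => /eqP E; subst; rewrite Hb in n1.
Qed.

Lemma p1_Qa a : uniq I -> a \in I ->
  filter (Qa a) (p1 k I inA m l) = step1 inA m l (p0 T k) a.
Proof.
move=> U Ha; apply: fold_Qa => // [q b nb|q].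
  rewrite /step1; case: (inA b).
    by rewrite filter_ra_out //= eq_sym.
  by rewrite filter_rb_out //= eq_sym.
rewrite /step1; case: (inA a).
  by rewrite filter_ra_in //= eqxx.
by rewrite filter_rb_in //= eqxx.
Qed.

Lemma p2_Qa a : uniq I -> a \in I ->
  filter (Qa a) (p2 k I inA n r) = step2 inA n r (p0 T k) a.
Proof.
move=> U Ha; apply: fold_Qa => // [q b nb|q].
  rewrite /step2; case: (inA b).
    by rewrite filter_rb_out //= eq_sym.
  by rewrite filter_ra_out //= eq_sym.
rewrite /step2; case: (inA a).
  by rewrite filter_rb_in //= eqxx.
by rewrite filter_ra_in //= eqxx.
Qed.

Lemma ra_p0 j x : 1 <= j <= k ->
  repl_after (inl j) x (p0 T k) =
  map inl (iota 1 j.-1) ++ inl j :: x :: map inl (iota j.+1 (k - j)).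
Proof.
move=> hj; rewrite (@p0_split T k j hj) /repl_after flat_split /= ?eqxx //.
move=> z; case: eqP => // -> ; rewrite mem_cat.
by rewrite (negbTE (notin_U _ j)) (negbTE (notin_V _ k j)).
Qed.

Lemma rb_p0 j x : 1 <= j <= k ->
  repl_before (inl j) x (p0 T k) =
  map inl (iota 1 j.-1) ++ x :: inl j :: map inl (iota j.+1 (k - j)).
Proof.
move=> hj; rewrite (@p0_split T k j hj) /repl_before flat_split /= ?eqxx //.
move=> z; case: eqP => // -> ; rewrite mem_cat.
by rewrite (negbTE (notin_U _ j)) (negbTE (notin_V _ k j)).
Qed.

Lemma p1_Pp i a : uniq I -> a \in I -> 1 <= i <= k ->
  (inA a -> 1 <= m a <= k) -> (~~ inA a -> 1 <= l a <= k) ->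
  filter (Pp i a) (p1 k I inA m l) =
   if inA a then (if i < m a then [:: inl i] else [::]) ++
                 (if i == m a then [:: inl i] else [::]) ++ inr a ::
                 (if m a < i then [:: inl i] else [::])
   else (if i < l a then [:: inl i] else [::]) ++ inr a ::
        (if i == l a then [:: inl i] else [::]) ++
        (if l a < i then [:: inl i] else [::]).
Proof.
move=> U Ha hi hm hl.
rewrite -(@filter_sub T (Pp i a) (Qa a)); last first.
  by case=> [t|b] //=; rewrite /Pp /= orFb => /eqP ->.
rewrite p1_Qa // /step1; case: (inA a) hm hl => hm hl.
  rewrite ra_p0; last exact: hm.
  rewrite (@filtP_split i a (m a) [::] [:: inr a]) //; last exact: hm.
  by rewrite /= /Pp inr_inl eqxx.
rewrite rb_p0; last exact: hl.
rewrite (@filtP_split i a (l a) [:: inr a] [::]) //; last exact: hl.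
by rewrite /= /Pp inr_inl eqxx.
Qed.

Lemma p2_Pp i a : uniq I -> a \in I -> 1 <= i <= k ->
  (inA a -> 1 <= n a <= k) -> (~~ inA a -> 1 <= r a <= k) ->
  filter (Pp i a) (p2 k I inA n r) =
   if inA a then (if i < n a then [:: inl i] else [::]) ++ inr a ::
                 (if i == n a then [:: inl i] else [::]) ++
                 (if n a < i then [:: inl i] else [::])
   else (if i < r a then [:: inl i] else [::]) ++
        (if i == r a then [:: inl i] else [::]) ++ inr a ::
        (if r a < i then [:: inl i] else [::]).
Proof.
move=> U Ha hi hm hl.
rewrite -(@filter_sub T (Pp i a) (Qa a)); last first.
  by case=> [t|b] //=; rewrite /Pp /= orFb => /eqP ->.
rewrite p2_Qa // /step2; case: (inA a) hm hl => hm hl.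
  rewrite rb_p0; last exact: hm.
  rewrite (@filtP_split i a (n a) [:: inr a] [::]) //; last exact: hm.
  by rewrite /= /Pp inr_inl eqxx.
rewrite ra_p0; last exact: hl.
rewrite (@filtP_split i a (r a) [::] [:: inr a]) //; last exact: hl.
by rewrite /= /Pp inr_inl eqxx.
Qed.

Lemma p3_split : 1 <= dmax I inA m <= k ->
  p3 k I inA m l = map inl (iota 1 (dmax I inA m).-1) ++ inl (dmax I inA m) ::
     rev (filter (isA inA) (p1 k I inA m l)) ++
     map inl (iota (dmax I inA m).+1 (k - dmax I inA m)).
Proof.
move=> hd; rewrite /p3 (@p0_split T k _ hd) flat_split /= ?eqxx //.
move=> z; case: eqP => // -> ; rewrite mem_cat.
by rewrite (negbTE (notin_U _ _)) (negbTE (notin_V _ k _)).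
Qed.

Lemma p3_Pp i a : 1 <= i <= k -> 1 <= dmax I inA m <= k ->
  filter (Pp i a) (p3 k I inA m l) =
  (if i < dmax I inA m then [:: inl i] else [::]) ++
  (if i == dmax I inA m then [:: inl i] else [::]) ++
  rev (filter (isA inA) (filter (Pp i a) (p1 k I inA m l))) ++
  (if dmax I inA m < i then [:: inl i] else [::]).
Proof.
move=> hi hd; rewrite p3_split //.
rewrite (@filtP_split i a _ [::] (rev (filter (isA inA) (p1 k I inA m l)))) //.
by rewrite filter_rev filter_commute.
Qed.

Definition isInl (z : vtx T) := if z is inl _ then true else false.

Lemma p0_inl : filter isInl (p0 T k) = p0 T k.
Proof. by apply/all_filterP; rewrite all_map; apply/allP. Qed.

Lemma p1_inl : filter isInl (p1 k I inA m l) = p0 T k.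
Proof.
rewrite fold_out ?p0_inl // => q b _; rewrite /step1; case: (inA b).
  by rewrite filter_ra_out.
by rewrite filter_rb_out.
Qed.

Lemma p2_inl : filter isInl (p2 k I inA n r) = p0 T k.
Proof.
rewrite fold_out ?p0_inl // => q b _; rewrite /step2; case: (inA b).
  by rewrite filter_rb_out.
by rewrite filter_ra_out.
Qed.

Lemma p3_inl : filter isInl (p3 k I inA m l) = p0 T k.
Proof.
rewrite /p3 filter_flat_same ?p0_inl // => z.
case: eqP => [->|_] //=; rewrite filter_rev filter_nil //.
by case.
Qed.

Lemma p0_pair i j : 1 <= i -> i < j -> j <= k ->
  filter (fun z => (z == inl i) || (z == inl j)) (p0 T k) = [:: inl i; inl j].
Proof.
move=> h1 h2 h3; rewrite (@p0_split T k j) ?h3 ?andbT; last by lia.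
rewrite filter_cat /= !filter_map.
rewrite (@filt_iota _ i); last first.
  move=> t ht /=; rewrite !inl_eq; have -> : (t == j) = false by lia. by rewrite orbF.
rewrite (@filt_iota _ i); last first.
  move=> t ht /=; rewrite !inl_eq; have -> : (t == j) = false by lia. by rewrite orbF.
rewrite eqxx orbT.
have -> : (1 <= i < 1 + j.-1) = true by lia.
by have -> : (j.+1 <= i < j.+1 + (k - j)) = false by lia.
Qed.

End Aux2.

Lemma alt_sym (T : eqType) (x y : vtx T) u : alternate x y u -> alternate y x u.
Proof.
rewrite /alternate /restr2.
have -> : [seq z <- u | (z == y) || (z == x)] = [seq z <- u | (z == x) || (z == y)].
  by apply: eq_filter => z; rewrite orbC.
by case; [right|left].
Qed.

Lemma alt_of (T : eqType) (x y : vtx T) u s : restr2 x y u = s ->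
  s = altw x y (size s) \/ s = altw y x (size s) -> alternate x y u.
Proof. by rewrite /alternate => ->. Qed.

Lemma clique (T : eqType) (k : nat) (I : seq T) (inA : T -> bool) (m n l r : T -> nat) i j :
  1 <= i -> i < j -> j <= k -> alternate (inl i) (inl j) (word_w k I inA m n l r).
Proof.
move=> h1 h2 h3.
set Pc := fun z : vtx T => (z == inl i) || (z == inl j).
have sub : forall z, Pc z -> isInl z by case=> // b; rewrite /Pc.
apply: (@alt_of _ _ _ _ [:: inl i; inl j; inl i; inl j; inl i; inl j]); last by left.
change (filter Pc (word_w k I inA m n l r) = [:: inl i; inl j; inl i; inl j; inl i; inl j]).
rewrite /word_w !filter_cat filter_rev filter_nil; last by case=> // b; rewrite /Pc.
rewrite -(@filter_sub T Pc (@isInl T) (p1 k I inA m l) sub) -(@filter_sub T Pc (@isInl T) (p2 k I inA n r) sub).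
rewrite -(@filter_sub T Pc (@isInl T) (p3 k I inA m l) sub) p1_inl p2_inl p3_inl.
by rewrite /Pc p0_pair.
Qed.

Lemma mixed (T : eqType) (k : nat) (I : seq T) (N : T -> nat -> bool)
  (inA : T -> bool) (m n l r : T -> nat) :
  uniq I ->
  (forall a, a \in I -> inA a = false ->
     1 <= l a /\ l a <= r a /\ r a <= k /\
     forall i, N a i = (l a <= i <= r a)) ->
  (forall a, a \in I -> inA a = true ->
     [/\ 1 <= m a, m a < n a, n a <= k,
         (forall i, N a i = (1 <= i <= m a) || (n a <= i <= k)) &
         ~ (exists l' r', l' <= r' /\ forall i, N a i = (l' <= i <= r'))]) ->
  (forall a a', a \in I -> a' \in I -> inA a = true -> inA a' = true ->
     m a' < n a /\ m a < n a') ->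
  forall i a, 1 <= i <= k -> a \in I -> N a i ->
  alternate (inl i) (inr a) (word_w k I inA m n l r).
Proof.
move=> U HB HA H3 i a hi Ha Hadj.
set d := dmax I inA m.
have hd : 1 <= d <= k.
  rewrite /d /dmax leq_maxl /= geq_max; apply/andP; split; first lia.
  apply/bigmax_leqP_seq => b Hb HAb.
  by case: (HA b Hb HAb) => *; lia.
have hmd : forall b, b \in I -> inA b -> m b <= d.
  move=> b Hb HAb; apply: leq_trans _ (leq_maxr 1 _).
  by apply: (@leq_bigmax_seq _ I inA m b).
have hdn : inA a -> d < n a.
  move=> HAa; rewrite /d /dmax gtn_max; apply/andP; split.
    by case: (HA a Ha HAa) => *; lia.
  have : \max_(b <- I | inA b) m b <= (n a).-1.
    apply/bigmax_leqP_seq => b Hb HAb.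
    by case: (H3 a b Ha Hb HAa HAb) => *; lia.
  by case: (HA a Ha HAa) => *; lia.
have E : restr2 (inl i) (inr a) (word_w k I inA m n l r) =
  filter (Pp i a) (p1 k I inA m l) ++
  rev (filter (isB inA) (filter (Pp i a) (p1 k I inA m l))) ++
  filter (Pp i a) (p2 k I inA n r) ++ filter (Pp i a) (p3 k I inA m l).
  by rewrite /restr2 /word_w !filter_cat filter_rev filter_commute.
rewrite (p3_Pp l a hi hd) -/d in E.
case HAa: (inA a) in E.
  case: (HA a Ha HAa) => hm1 hmn hnk HN _.
  have hm : inA a -> 1 <= m a <= k by move=> _; lia.
  have hn : inA a -> 1 <= n a <= k by move=> _; lia.
  rewrite (p1_Pp U Ha hi hm (fun h : ~~ inA a => ltac:(by rewrite HAa in h))) in E.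
  rewrite (p2_Pp U Ha hi hn (fun h : ~~ inA a => ltac:(by rewrite HAa in h))) in E.
  have := hmd a Ha HAa; have := hdn HAa => h4 h5.
  rewrite HN in Hadj.
  apply: (alt_of E).
  case: (ltngtP i (m a)) => h1; case: (ltngtP i (n a)) => h2;
    case: (ltngtP i d) => h3; try lia;
    rewrite /= ?HAa /rev /= ?HAa /=; try (by left); by right.
case: (HB a Ha HAa) => hl1 [hlr [hrk HN]].
have hm : ~~ inA a -> 1 <= l a <= k by move=> _; lia.
have hn : ~~ inA a -> 1 <= r a <= k by move=> _; lia.
rewrite (p1_Pp U Ha hi (fun h : inA a => ltac:(by rewrite HAa in h)) hm) in E.
rewrite (p2_Pp U Ha hi (fun h : inA a => ltac:(by rewrite HAa in h)) hn) in E.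
rewrite HN in Hadj.
apply: (alt_of E).
case: (ltngtP i (l a)) => h1; case: (ltngtP i (r a)) => h2;
  case: (ltngtP i d) => h3; try lia;
  rewrite /= ?HAa /rev /= ?HAa /=; try (by left); by right.
Qed.
Theorem lemma2 (T : eqType) (k : nat) (I : seq T) (N : T -> nat -> bool)
  (inA : T -> bool) (m n l r : T -> nat) :
  uniq I ->
  (* maximality of C *)
  (forall a, a \in I -> exists i, 1 <= i <= k /\ ~~ N a i) ->
  (* (i) together with the definition of B (interval neighbourhoods), l_a, r_a *)
  (forall a, a \in I -> inA a = false ->
     1 <= l a /\ l a <= r a /\ r a <= k /\
     forall i, N a i = (l a <= i <= r a)) ->
  (* (i) together with the definition of A = I \ B, m_a, n_a *)
  (forall a, a \in I -> inA a = true ->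
     [/\ 1 <= m a, m a < n a, n a <= k,
         (forall i, N a i = (1 <= i <= m a) || (n a <= i <= k)) &
         ~ (exists l' r', l' <= r' /\ forall i, N a i = (l' <= i <= r'))]) ->
  (* (ii) *)
  (forall a b, a \in I -> b \in I -> inA a = true -> inA b = false ->
     m a < l b \/ r b < n a) ->
  (* (iii) *)
  (forall a a', a \in I -> a' \in I -> inA a = true -> inA a' = true ->
     m a' < n a /\ m a < n a') ->
  forall x y : vtx T, inV k I x -> inV k I y -> adj N x y ->
    alternate x y (word_w k I inA m n l r).
Proof.
move=> U Hmax HB HA H2 H3 [i|a] [j|b] //= Hx Hy Hadj.
- case: (ltngtP i j) Hadj => h // _.
    by apply: clique; lia.
  by apply: alt_sym; apply: clique; lia.
- exact: (mixed U HB HA H3 Hx Hy Hadj).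
- by apply: alt_sym; exact: (mixed U HB HA H3 Hy Hx Hadj).
Qed.
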